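(* Let $R$ be a ring and $\mathrm{RCFM}(R)$ the ring of $\mathbb{N}_0\times\mathbb{N}_0$ row-column-finite matrices over $R$. The functor $\mathfrak{i}\colon\mathrm{mod}(R)\to\mathrm{mod}(\mathrm{RCFM}(R))$, $\mathfrak{i}M=\operatorname{Hom}_R(R\langle\mathbb{N}_0\rangle,M)$, is a full exact embedding of abelian categories, and it has an exact left adjoint $\mathfrak{r}$ such that $\mathfrak{r}\mathfrak{i}$ is naturally isomorphic to the identity functor of $\mathrm{mod}(R)$. (One may take $\mathfrak{r}(\mathcal{N})=\mathcal{N}\mathsf{e}_{00}$, regarded as a right module over $\mathsf{e}_{00}\mathrm{RCFM}(R)\mathsf{e}_{00}\cong R$, where $\mathsf{e}_{00}$ is the matrix unit.)
   Context: $\mathrm{mod}(\Lambda)$ denotes the category of right $\Lambda$-modules. $R\langle\mathbb{N}_0\rangle$ is the free right $R$-module of column vectors indexed by $\mathbb{N}_0$ with finitely many nonzero entries; $\mathrm{RCFM}(R)$ (matrices with finitely many nonzero entries in each row and column) acts on it by left multiplication by $R$-linear maps, and $\operatorname{Hom}_R(R\langle\mathbb{N}_0\rangle,M)$ is a right $\mathrm{RCFM}(R)$-module via $(f\cdot\mathsf{X})(v)=f(\mathsf{X}v)$. *)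

(* Defs.v *)
From mathcomp Require Import all_boot all_algebra.
From Stdlib Require Import ClassicalEpsilon.

Set Implicit Arguments.
Unset Strict Implicit.
Unset Printing Implicit Defensive.

Import GRing.Theory.
Local Open Scope ring_scope.

(* A (right) module over a "ring" S is described by a carrier type, the     *)
(* predicate [el] of its elements, zero, addition, opposite, and the right  *)
(* action  x |-> x . s ; the module axioms are stated by [is_mod] below.    *)
Record modl (S : Type) := Modl {
  car  : Type;
  el   : car -> Prop;
  mz   : car;
  madd : car -> car -> car;
  mopp : car -> car;
  mact : car -> S -> car }.
Arguments Modl {S}.
Arguments car {S}. Arguments el {S}. Arguments mz {S}.
Arguments madd {S}. Arguments mopp {S}. Arguments mact {S}.

Record is_mod (S : Type) (sel : S -> Prop) (sadd smul : S -> S -> S)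
    (sone : S) (M : modl S) : Prop := {
  mod_el0   : el M (mz M);
  mod_elD   : forall x y, el M x -> el M y -> el M (madd M x y);
  mod_elN   : forall x, el M x -> el M (mopp M x);
  mod_elA   : forall x s, el M x -> sel s -> el M (mact M x s);
  mod_addA  : forall x y z, el M x -> el M y -> el M z ->
                madd M x (madd M y z) = madd M (madd M x y) z;
  mod_addC  : forall x y, el M x -> el M y -> madd M x y = madd M y x;
  mod_add0  : forall x, el M x -> madd M (mz M) x = x;
  mod_addN  : forall x, el M x -> madd M (mopp M x) x = mz M;
  mod_actDr : forall x s t, el M x -> sel s -> sel t ->
                mact M x (sadd s t) = madd M (mact M x s) (mact M x t);
  mod_actDl : forall x y s, el M x -> el M y -> sel s ->
                mact M (madd M x y) s = madd M (mact M x s) (mact M y s);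
  mod_actM  : forall x s t, el M x -> sel s -> sel t ->
                mact M x (smul s t) = mact M (mact M x s) t;
  mod_act1  : forall x, el M x -> mact M x sone = x }.

(* Module homomorphisms (only their values on elements matter). *)
Record is_hom (S : Type) (sel : S -> Prop) (M N : modl S)
    (h : car M -> car N) : Prop := {
  hom_el  : forall x, el M x -> el N (h x);
  hom_add : forall x y, el M x -> el M y -> h (madd M x y) = madd N (h x) (h y);
  hom_act : forall x s, el M x -> sel s -> h (mact M x s) = mact N (h x) s }.

Definition hom_eq (S : Type) (M : modl S) (T : Type) (h h' : car M -> T) :=
  forall x, el M x -> h x = h' x.

Definition exact_at (S : Type) (M1 M2 M3 : modl S)
    (f : car M1 -> car M2) (g : car M2 -> car M3) : Prop :=
  forall y, el M2 y -> ((exists x, el M1 x /\ f x = y) <-> g y = mz M3).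

Section Mat.
Variable R : pzRingType.

Definition vanish_from (u : nat -> R) (n : nat) : Prop :=
  forall j, (n <= j)%N -> u j = 0.
Definition finsupp (u : nat -> R) : Prop := exists n, vanish_from u n.
(* a (classically chosen) bound beyond which u vanishes (if u is finsupp) *)
Definition zbound (u : nat -> R) : nat := epsilon (inhabits 0%N) (vanish_from u).

(* R<N_0>: column vectors with finitely many nonzero entries *)
Definition vec := nat -> R.
Definition vadd (v w : vec) : vec := fun j => v j + w j.
Definition vscale (v : vec) (r : R) : vec := fun j => v j * r.

(* N_0 x N_0 matrices; X i j = entry in row i, column j *)
Definition mat := nat -> nat -> R.
Definition rowfin (X : mat) : Prop := forall i, finsupp (X i).
Definition colfin (X : mat) : Prop := forall j, finsupp (fun i => X i j).
Definition rcf (X : mat) : Prop := rowfin X /\ colfin X.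

Definition matadd (X Y : mat) : mat := fun i j => X i j + Y i j.
(* finite sums: row i of X vanishes from zbound (X i) on *)
Definition matmul (X Y : mat) : mat :=
  fun i k => \sum_(j < zbound (X i)) X i j * Y j k.
Definition matone : mat := fun i j => if i == j then 1 else 0.
Definition scal00 (r : R) : mat :=
  fun i j => if (i == 0%N) && (j == 0%N) then r else 0.
Definition e00 : mat := scal00 1.
Definition mv (X : mat) (v : vec) : vec :=
  fun i => \sum_(j < zbound v) X i j * v j.

End Mat.

(* right R-modules and right RCFM(R)-modules *)
Definition RMod (R : pzRingType) (M : modl R) : Prop :=
  is_mod (fun _ : R => True) +%R *%R 1 M.
Definition LMod (R : pzRingType) (N : modl (mat R)) : Prop :=
  is_mod (@rcf R) (@matadd R) (@matmul R) (@matone R) N.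
Definition homR (R : pzRingType) (M N : modl R) (h : car M -> car N) :=
  is_hom (fun _ : R => True) h.
Definition homL (R : pzRingType) (M N : modl (mat R)) (h : car M -> car N) :=
  is_hom (@rcf R) h.

(* R-linear maps R<N_0> -> M (normalised to 0 outside R<N_0>). *)
Definition linR (R : pzRingType) (M : modl R) (f : vec R -> car M) : Prop :=
  [/\ forall v, finsupp v -> el M (f v),
      forall v w, finsupp v -> finsupp w -> f (vadd v w) = madd M (f v) (f w),
      forall v r, finsupp v -> f (vscale v r) = mact M (f v) r
    & forall v, ~ finsupp v -> f v = mz M].

Definition iobj (R : pzRingType) (M : modl R) : modl (mat R) :=
  Modl (vec R -> car M) (@linR R M)
    (fun _ => mz M)
    (fun f g v => madd M (f v) (g v))
    (fun f v => mopp M (f v))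
    (fun f X v => if excluded_middle_informative (finsupp v)
                  then f (mv X v) else mz M).

Definition ihom (R : pzRingType) (M N : modl R) (h : car M -> car N) :
    car (iobj M) -> car (iobj N) := fun f v => h (f v).
Arguments ihom {R} M N h.

Definition robj (R : pzRingType) (N : modl (mat R)) : modl R :=
  Modl (car N)
    (fun n => el N n /\ exists n', el N n' /\ n = mact N n' (e00 R))
    (mz N) (madd N) (mopp N)
    (fun n r => mact N n (scal00 r)).

Definition rhom (R : pzRingType) (N N' : modl (mat R)) (g : car N -> car N') :
    car (robj N) -> car (robj N') := g.
Arguments rhom {R} N N' g.

Definition i_functor (R : pzRingType) : Prop :=
  [/\ forall M : modl R, RMod M -> LMod (iobj M),
      forall (M N : modl R) (h : car M -> car N), RMod M -> RMod N -> homR h ->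
        homL (ihom M N h),
      forall M : modl R, RMod M -> hom_eq (ihom M M id) id
    & forall (M N P : modl R) (h : car M -> car N) (g : car N -> car P),
        RMod M -> RMod N -> RMod P -> homR h -> homR g ->
        hom_eq (ihom M P (g \o h)) (ihom N P g \o ihom M N h)].

Definition i_faithful (R : pzRingType) : Prop :=
  forall (M N : modl R) (h h' : car M -> car N),
    RMod M -> RMod N -> homR h -> homR h' ->
    hom_eq (ihom M N h) (ihom M N h') -> hom_eq h h'.

Definition i_full (R : pzRingType) : Prop :=
  forall (M N : modl R) (g : car (iobj M) -> car (iobj N)),
    RMod M -> RMod N -> homL g ->
    exists h : car M -> car N, homR h /\ hom_eq (ihom M N h) g.

Definition i_exact (R : pzRingType) : Prop :=
  forall (M1 M2 M3 : modl R) (f : car M1 -> car M2) (g : car M2 -> car M3),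
    RMod M1 -> RMod M2 -> RMod M3 -> homR f -> homR g ->
    exact_at f g -> exact_at (ihom M1 M2 f) (ihom M2 M3 g).

Definition r_functor (R : pzRingType) : Prop :=
  [/\ forall N : modl (mat R), LMod N -> RMod (robj N),
      forall (N N' : modl (mat R)) (g : car N -> car N'), LMod N -> LMod N' -> homL g ->
        homR (rhom N N' g),
      forall N : modl (mat R), LMod N -> hom_eq (rhom N N id) id
    & forall (N N' N'' : modl (mat R)) (g : car N -> car N') (g' : car N' -> car N''),
        LMod N -> LMod N' -> LMod N'' -> homL g -> homL g' ->
        hom_eq (rhom N N'' (g' \o g)) (rhom N' N'' g' \o rhom N N' g)].

Definition r_exact (R : pzRingType) : Prop :=
  forall (N1 N2 N3 : modl (mat R)) (f : car N1 -> car N2) (g : car N2 -> car N3),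
    LMod N1 -> LMod N2 -> LMod N3 -> homL f -> homL g ->
    exact_at f g -> exact_at (rhom N1 N2 f) (rhom N2 N3 g).

(* r is left adjoint to i: bijections Hom_R(r N, M) = Hom_RCFM(N, i M),
   natural in N and M. *)
Definition r_left_adjoint_i (R : pzRingType) : Prop :=
  exists (phi : forall (N : modl (mat R)) (M : modl R),
                  (car (robj N) -> car M) -> car N -> car (iobj M))
         (psi : forall (N : modl (mat R)) (M : modl R),
                  (car N -> car (iobj M)) -> car (robj N) -> car M),
  (forall (N : modl (mat R)) (M : modl R), LMod N -> RMod M ->
     (forall u : car (robj N) -> car M, homR u -> homL (phi N M u)) /\
     (forall w : car N -> car (iobj M), homL w -> homR (psi N M w)) /\
     (forall u u' : car (robj N) -> car M, homR u -> homR u' ->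
        hom_eq u u' -> hom_eq (phi N M u) (phi N M u')) /\
     (forall w w' : car N -> car (iobj M), homL w -> homL w' ->
        hom_eq w w' -> hom_eq (psi N M w) (psi N M w')) /\
     (forall u : car (robj N) -> car M, homR u ->
        hom_eq (psi N M (phi N M u)) u) /\
     (forall w : car N -> car (iobj M), homL w ->
        hom_eq (phi N M (psi N M w)) w)) /\
  (forall (N : modl (mat R)) (M M' : modl R) (u : car (robj N) -> car M)
          (h : car M -> car M'),
     LMod N -> RMod M -> RMod M' -> homR u -> homR h ->
     hom_eq (phi N M' (h \o u)) (ihom M M' h \o phi N M u)) /\
  (forall (N' N : modl (mat R)) (M : modl R) (g : car N' -> car N)
          (u : car (robj N) -> car M),
     LMod N' -> LMod N -> RMod M -> homL g -> homR u ->
     hom_eq (phi N' M (u \o rhom N' N g)) (phi N M u \o g)).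

Definition ri_iso_id (R : pzRingType) : Prop :=
  exists (eta : forall M : modl R, car (robj (iobj M)) -> car M)
         (eta' : forall M : modl R, car M -> car (robj (iobj M))),
  (forall M : modl R, RMod M ->
     [/\ homR (eta M), homR (eta' M),
         hom_eq (eta' M \o eta M) id & hom_eq (eta M \o eta' M) id]) /\
  (forall (M M' : modl R) (h : car M -> car M'),
     RMod M -> RMod M' -> homR h ->
     hom_eq (h \o eta M) (eta M' \o rhom (iobj M) (iobj M') (ihom M M' h))).

(* Main.v *)
Require Import Defs.
From mathcomp Require Import all_boot all_algebra.
From Stdlib Require Import Classical ClassicalEpsilon FunctionalExtensionality.
Set Implicit Arguments. Unset Strict Implicit. Unset Printing Implicit Defensive.
Import GRing.Theory.
Local Open Scope ring_scope.

Section VM.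
Variable R : pzRingType.
Implicit Types (u v w : vec R) (X Y : mat R).

Lemma zbP (u : nat -> R) : finsupp u -> vanish_from u (zbound u).
Proof. move=> [n Hn]. rewrite /zbound. apply: epsilon_spec. by exists n. Qed.

Lemma vanish_mono (u : nat -> R) n m : vanish_from u n -> (n <= m)%N -> vanish_from u m.
Proof. move=> H nm j mj; apply: H; exact: leq_trans mj. Qed.

Lemma sum_trunc (G : nat -> R) n m : (forall j, (n <= j)%N -> G j = 0) -> (n <= m)%N ->
  \sum_(j < m) G j = \sum_(j < n) G j.
Proof.
move=> H nm; rewrite -!(big_mkord xpredT) (big_cat_nat (leq0n n) nm) /=.
have -> : \sum_(n <= i < m) G i = 0.
  by rewrite big_nat_cond big1 // => j /andP[/andP[nj _] _]; exact: H.
by rewrite addr0.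
Qed.

Lemma sum_bounds (G : nat -> R) n1 n2 : (forall j, (n1 <= j)%N -> G j = 0) ->
  (forall j, (n2 <= j)%N -> G j = 0) -> \sum_(j < n1) G j = \sum_(j < n2) G j.
Proof.
move=> H1 H2; case: (leqP n1 n2) => h.
  by rewrite (sum_trunc H1 h).
by rewrite (sum_trunc H2 (ltnW h)).
Qed.

Lemma mv_bound X v n i : finsupp v -> vanish_from v n ->
  mv X v i = \sum_(j < n) X i j * v j.
Proof.
move=> fv vn; rewrite /mv; apply: (sum_bounds (G := fun j => X i j * v j)) => j hj.
  by rewrite (zbP fv) // mulr0.
by rewrite vn // mulr0.
Qed.

Lemma mv_boundX X v n i : finsupp v -> vanish_from (X i) n ->
  mv X v i = \sum_(j < n) X i j * v j.
Proof.
move=> fv vn; rewrite /mv; apply: (sum_bounds (G := fun j => X i j * v j)) => j hj.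
  by rewrite (zbP fv) // mulr0.
by rewrite vn // mul0r.
Qed.

Lemma matmul_bound X Y n i k : finsupp (X i) -> vanish_from (X i) n ->
  matmul X Y i k = \sum_(j < n) X i j * Y j k.
Proof.
move=> fv vn; rewrite /matmul; apply: (sum_bounds (G := fun j => X i j * Y j k)) => j hj.
  by rewrite (zbP fv) // mul0r.
by rewrite vn // mul0r.
Qed.

Lemma finsupp_vadd v w : finsupp v -> finsupp w -> finsupp (vadd v w).
Proof.
move=> [n Hn] [m Hm]; exists (maxn n m) => j hj.
rewrite /vadd Hn ?Hm ?addr0 //; apply: leq_trans hj; [exact: leq_maxr|exact: leq_maxl].
Qed.

Lemma finsupp_vscale v r : finsupp v -> finsupp (vscale v r).
Proof. move=> [n Hn]; exists n => j hj; by rewrite /vscale Hn // mul0r. Qed.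

Definition e0 : vec R := fun i => if i == 0%N then 1 else 0.
Definition ej (k : nat) : vec R := fun i => if i == k then 1 else 0.
Definition V (v : vec R) : mat R := fun i j => if j == 0%N then v i else 0.

Lemma finsupp_ej k : finsupp (ej k).
Proof. exists k.+1 => j hj; rewrite /ej; case: eqP => // e; by rewrite e ltnn in hj. Qed.

Lemma finsupp_e0 : finsupp e0.
Proof. exists 1%N => j hj; rewrite /e0; case: eqP => // e; by rewrite e in hj. Qed.

Lemma mv_finsupp X v : colfin X -> finsupp v -> finsupp (mv X v).
Proof.
move=> cX fv; exists (\max_(j < zbound v) zbound (fun i => X i j)) => i hi.
rewrite /mv big1 // => j _.
have := zbP (cX j); move=> /(_ i) ->; first by rewrite mul0r.
apply: leq_trans hi; exact: (leq_bigmax (F := fun j : 'I_(zbound v) => zbound (fun i => X i j))).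
Qed.

Lemma mv_add X v w : finsupp v -> finsupp w -> mv X (vadd v w) = vadd (mv X v) (mv X w).
Proof.
move=> fv fw; apply: functional_extensionality => i.
set K := maxn (zbound v) (zbound w).
have hv : vanish_from v K by apply: (vanish_mono (zbP fv)); exact: leq_maxl.
have hw : vanish_from w K by apply: (vanish_mono (zbP fw)); exact: leq_maxr.
have hvw : vanish_from (vadd v w) K by move=> j hj; rewrite /vadd hv ?hw ?addr0.
rewrite /vadd (mv_bound _ _ (finsupp_vadd fv fw) hvw) (mv_bound _ _ fv hv) (mv_bound _ _ fw hw).
rewrite -big_split /=; apply: eq_bigr => j _; by rewrite mulrDr.
Qed.

Lemma mv_scale X v r : finsupp v -> mv X (vscale v r) = vscale (mv X v) r.
Proof.
move=> fv; apply: functional_extensionality => i.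
have h : vanish_from (vscale v r) (zbound v) by move=> j hj; rewrite /vscale (zbP fv) ?mul0r.
rewrite /vscale (mv_bound _ _ (finsupp_vscale r fv) h) /mv mulr_suml.
apply: eq_bigr => j _; by rewrite mulrA.
Qed.

Lemma mv_matadd X Y v : mv (matadd X Y) v = vadd (mv X v) (mv Y v).
Proof.
apply: functional_extensionality => i; rewrite /mv /vadd /matadd -big_split /=.
apply: eq_bigr => j _; by rewrite mulrDl.
Qed.

Lemma mv_one v : finsupp v -> mv (@matone R) v = v.
Proof.
move=> fv; apply: functional_extensionality => i.
set K := maxn (zbound v) i.+1.
have hv : vanish_from v K by apply: (vanish_mono (zbP fv)); exact: leq_maxl.
have hi : (i < K)%N by rewrite leq_max ltnSn orbT.
rewrite (mv_bound _ _ fv hv) /matone.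
rewrite (eq_bigr (fun j : 'I_K => if (j == i :> nat) then v j else 0)); last first.
  move=> j _; rewrite eq_sym; case: eqP => _; by rewrite ?mul1r ?mul0r.
by rewrite -big_mkcond big_ord1_eq hi.
Qed.

Lemma mv_matmul X Y v : rcf X -> rcf Y -> finsupp v ->
  mv (matmul X Y) v = mv X (mv Y v).
Proof.
move=> [rX cX] [rY cY] fv; apply: functional_extensionality => i.
rewrite (mv_boundX (mv_finsupp cY fv) (zbP (rX i))).
rewrite /mv /matmul.
under eq_bigr do rewrite mulr_suml.
under [RHS]eq_bigr do rewrite mulr_sumr.
rewrite exchange_big /=; apply: eq_bigr => j _; apply: eq_bigr => k _; by rewrite mulrA.
Qed.


Lemma rowfin_V v : rowfin (V v).
Proof. move=> i; exists 1%N => j hj; rewrite /V; case: eqP => // e; by rewrite e in hj. Qed.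

Lemma rcf_V v : finsupp v -> rcf (V v).
Proof.
move=> [n Hn]; split; first exact: rowfin_V.
move=> j; exists n => i hi; rewrite /V; case: eqP => // _; exact: Hn.
Qed.

Lemma mv_V v w : finsupp w -> mv (V v) w = vscale v (w 0%N).
Proof.
move=> fw; apply: functional_extensionality => i.
have h : vanish_from (V v i) 1%N.
  move=> j hj; rewrite /V; case: eqP => // e; by rewrite e in hj.
rewrite (mv_boundX fw h).
by rewrite big_ord_recr big_ord0 /= add0r /V /vscale.
Qed.

Lemma matmul_V X v : rowfin X -> finsupp v -> matmul X (V v) = V (mv X v).
Proof.
move=> rX fv; apply: functional_extensionality => i; apply: functional_extensionality => k.
case: (eqVneq k 0%N) => [->|k0].
  rewrite /V eqxx (mv_boundX fv (zbP (rX i))) /matmul; apply: eq_bigr => j _; by rewrite eqxx.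
rewrite /matmul /V (negbTE k0) big1 // => j _; exact: mulr0.
Qed.

Lemma V_vadd v w : V (vadd v w) = matadd (V v) (V w).
Proof.
apply: functional_extensionality => i; apply: functional_extensionality => k.
rewrite /V /matadd /vadd; case: eqP => _ //; by rewrite addr0.
Qed.

Lemma scal00_V s : scal00 s = V (vscale e0 s).
Proof.
apply: functional_extensionality => i; apply: functional_extensionality => k.
rewrite /scal00 /V /vscale /e0; case: (i == 0%N); case: (k == 0%N) => //=;
  by rewrite ?mul1r ?mul0r.
Qed.

Lemma vscale1 v : vscale v 1 = v.
Proof. apply: functional_extensionality => i; by rewrite /vscale mulr1. Qed.

Lemma e00_V : e00 R = V e0.
Proof. by rewrite /e00 scal00_V vscale1. Qed.

Lemma e00_ej : ej 0 = e0 :> vec R.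
Proof. by []. Qed.

Lemma rcf_scal00 (s : R) : rcf (scal00 s).
Proof. rewrite scal00_V; apply: rcf_V; apply: finsupp_vscale; exact: finsupp_e0. Qed.

Lemma rcf_matone : @rcf R (@matone R).
Proof.
split.
  move=> i; exists i.+1 => j hj; rewrite /matone; case: eqP => // e; by rewrite e ltnn in hj.
move=> j; exists j.+1 => i hi; rewrite /matone; case: eqP => // e; by rewrite e ltnn in hi.
Qed.

Lemma matmul_VV a b : finsupp b -> matmul (V a) (V b) = V (vscale a (b 0%N)).
Proof. move=> fb; by rewrite matmul_V ?mv_V //; exact: rowfin_V. Qed.

Lemma e0_0 : e0 0%N = 1 :> R.
Proof. by []. Qed.

Lemma vscaleA v (r t : R) : vscale (vscale v r) t = vscale v (r * t).
Proof. apply: functional_extensionality => i; by rewrite /vscale mulrA. Qed.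

Lemma matmul_scal00 (s t : R) : matmul (scal00 s) (scal00 t) = scal00 (s * t).
Proof.
rewrite !scal00_V matmul_VV; last by apply: finsupp_vscale; exact: finsupp_e0.
by rewrite /vscale e0_0 mul1r -/(vscale e0 s) -/(vscale (vscale e0 s) t) vscaleA.
Qed.

Lemma matmul_scal00_e00 (s : R) : matmul (scal00 s) (e00 R) = scal00 s.
Proof. by rewrite /e00 matmul_scal00 mulr1. Qed.

Lemma matadd_scal00 (s t : R) : matadd (scal00 s) (scal00 t) = scal00 (s + t).
Proof.
apply: functional_extensionality => i; apply: functional_extensionality => k.
rewrite /scal00 /matadd; case: (_ && _) => //; by rewrite addr0.
Qed.

Lemma matmul_V_scal00 v (r : R) : finsupp v -> matmul (V v) (scal00 r) = V (vscale v r).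
Proof.
move=> fv; rewrite scal00_V matmul_VV; last by apply: finsupp_vscale; exact: finsupp_e0.
by rewrite /vscale e0_0 mul1r.
Qed.

Lemma mv_scal00 (s : R) w : finsupp w -> mv (scal00 s) w = vscale e0 (s * w 0%N).
Proof. move=> fw; by rewrite scal00_V mv_V // vscaleA. Qed.

Lemma V_e0_mv v : mv (V v) e0 = v.
Proof. by rewrite mv_V ?e0_0 ?vscale1 //; exact: finsupp_e0. Qed.

End VM.
Arguments e0 {R}.

Section GenMod.
Variables (S : Type) (sel : S -> Prop) (sadd smul : S -> S -> S) (sone : S) (M : modl S).
Hypothesis HM : is_mod sel sadd smul sone M.

Lemma addr0M x : el M x -> madd M x (mz M) = x.
Proof. move=> hx; by rewrite (mod_addC HM hx (mod_el0 HM)) (mod_add0 HM hx). Qed.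

Lemma addrNM x : el M x -> madd M x (mopp M x) = mz M.
Proof. move=> hx; by rewrite (mod_addC HM hx (mod_elN HM hx)) (mod_addN HM hx). Qed.

Lemma cancelM a b c : el M a -> el M b -> el M c -> madd M a c = madd M b c -> a = b.
Proof.
move=> ha hb hc e.
have : madd M (madd M a c) (mopp M c) = madd M (madd M b c) (mopp M c) by rewrite e.
have hn := mod_elN HM hc.
by rewrite -(mod_addA HM ha hc hn) -(mod_addA HM hb hc hn) (addrNM hc) (addr0M ha) (addr0M hb).
Qed.

Lemma mz_uniq x : el M x -> madd M x x = x -> x = mz M.
Proof. move=> hx e; apply: (cancelM hx (mod_el0 HM) hx). by rewrite e (mod_add0 HM hx). Qed.

Lemma add00 : madd M (mz M) (mz M) = mz M.
Proof. exact: (mod_add0 HM (mod_el0 HM)). Qed.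

Lemma oppmz : mopp M (mz M) = mz M.
Proof.
have e := mod_addN HM (mod_el0 HM).
by rewrite (addr0M (mod_elN HM (mod_el0 HM))) in e.
Qed.

Lemma add4M a b c d : el M a -> el M b -> el M c -> el M d ->
  madd M (madd M a b) (madd M c d) = madd M (madd M a c) (madd M b d).
Proof.
move=> ha hb hc hd.
rewrite -(mod_addA HM ha hb (mod_elD HM hc hd)) (mod_addA HM hb hc hd).
rewrite (mod_addC HM hb hc) -(mod_addA HM hc hb hd).
by rewrite (mod_addA HM ha hc (mod_elD HM hb hd)).
Qed.

Lemma oppDM a b : el M a -> el M b ->
  mopp M (madd M a b) = madd M (mopp M a) (mopp M b).
Proof.
move=> ha hb; have hab := mod_elD HM ha hb.
apply: (cancelM (mod_elN HM hab) (mod_elD HM (mod_elN HM ha) (mod_elN HM hb)) hab).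
rewrite (mod_addN HM hab) (add4M (mod_elN HM ha) (mod_elN HM hb) ha hb).
by rewrite (mod_addN HM ha) (mod_addN HM hb) add00.
Qed.

Lemma mzact s : sel s -> mact M (mz M) s = mz M.
Proof.
move=> hs; have h := mod_elA HM (mod_el0 HM) hs.
apply: mz_uniq => //; by rewrite -(mod_actDl HM (mod_el0 HM) (mod_el0 HM) hs) add00.
Qed.

Lemma oppactM x s : el M x -> sel s -> mact M (mopp M x) s = mopp M (mact M x s).
Proof.
move=> hx hs; have hn := mod_elN HM hx; have hxs := mod_elA HM hx hs.
apply: (cancelM (mod_elA HM hn hs) (mod_elN HM hxs) hxs).
by rewrite (mod_addN HM hxs) -(mod_actDl HM hn hx hs) (mod_addN HM hx) mzact.
Qed.

Fixpoint msum (n : nat) (F : nat -> car M) : car M :=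
  if n is n'.+1 then madd M (msum n' F) (F n') else mz M.

Lemma el_msum n F : (forall j, el M (F j)) -> el M (msum n F).
Proof. move=> h; elim: n => [|n IH] /=; [exact: mod_el0 HM | exact: (mod_elD HM IH (h n))]. Qed.

Lemma msum_add n F G : (forall j, el M (F j)) -> (forall j, el M (G j)) ->
  msum n (fun j => madd M (F j) (G j)) = madd M (msum n F) (msum n G).
Proof.
move=> hF hG; elim: n => [|n IH] /=; first by rewrite add00.
by rewrite IH add4M //; apply: el_msum.
Qed.

Lemma msum_trunc n m F : (forall j, el M (F j)) -> (forall j, (n <= j)%N -> F j = mz M) ->
  (n <= m)%N -> msum m F = msum n F.
Proof.
move=> hF h; elim: m => [|m IH] hm /=.
  by move: hm; rewrite leqn0 => /eqP ->.
case: (leqP n m) => nm.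
  by rewrite IH // h // addr0M //; apply: el_msum.
have -> : n = m.+1 by apply/eqP; rewrite eqn_leq hm.
by [].
Qed.

End GenMod.

Lemma hom_mz (S : Type) (sel sel' : S -> Prop) sadd smul sone sadd' smul' sone'
   (M N : modl S) (h : car M -> car N) :
  is_mod sel sadd smul sone M -> is_mod sel' sadd' smul' sone' N -> is_hom sel' h ->
  h (mz M) = mz N.
Proof.
move=> HM HN Hh; have e0 := mod_el0 HM.
apply: (mz_uniq HN (hom_el Hh e0)); by rewrite -(hom_add Hh e0 e0) (add00 HM).
Qed.

Lemma hom_msum (S : Type) (sel sel' : S -> Prop) sadd smul sone sadd' smul' sone'
   (M N : modl S) (h : car M -> car N) n F :
  is_mod sel sadd smul sone M -> is_mod sel' sadd' smul' sone' N -> is_hom sel' h ->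
  (forall j, el M (F j)) -> h (msum n F) = msum n (fun j => h (F j)).
Proof.
move=> HM HN Hh hF; elim: n => [|n IH] /=; first exact: (hom_mz HM HN Hh).
by rewrite (hom_add Hh (el_msum HM n hF) (hF n)) IH.
Qed.

Section IObj.
Variable R : pzRingType.
Variable M : modl R.
Hypothesis HM : RMod M.

Lemma act0 x : el M x -> mact M x 0 = mz M.
Proof.
move=> hx; have h := mod_elA HM hx (I : (fun _ : R => True) 0).
apply: (mz_uniq HM h); by rewrite -(mod_actDr HM hx I I) addr0.
Qed.

Lemma linR_el (f : vec R -> car M) v : linR f -> el M (f v).
Proof.
case=> h1 _ _ h4; case: (excluded_middle_informative (finsupp v)) => h.
  exact: h1.
rewrite h4 //; exact: (mod_el0 HM).
Qed.

Lemma iact_fs (f : vec R -> car M) X v : finsupp v -> mact (iobj M) f X v = f (mv X v).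
Proof. move=> h /=; by case: excluded_middle_informative. Qed.

Lemma iact_nfs (f : vec R -> car M) X v : ~ finsupp v -> mact (iobj M) f X v = mz M.
Proof. move=> h /=; by case: excluded_middle_informative. Qed.

Lemma ifs_fs (A : Type) (a b : A) (v : vec R) : finsupp v ->
  (if is_left (excluded_middle_informative (finsupp v)) then a else b) = a.
Proof. by case: excluded_middle_informative. Qed.

Lemma ifs_nfs (A : Type) (a b : A) (v : vec R) : ~ finsupp v ->
  (if is_left (excluded_middle_informative (finsupp v)) then a else b) = b.
Proof. by case: excluded_middle_informative. Qed.

Lemma LMod_iobj : LMod (iobj M).
Proof.
have e0 := mod_el0 HM.
constructor => /=.
- split => //.
  + move=> v w _ _; by rewrite (add00 HM).
  + move=> v r _; by rewrite (mzact HM).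
- move=> f g hf hg; split.
  + move=> v _; apply: (mod_elD HM); exact: linR_el.
  + move=> v w fv fw; case: (hf) => _ hf1 _ _; case: (hg) => _ hg1 _ _.
    rewrite hf1 // hg1 //; apply: (add4M HM) => //; exact: linR_el.
  + move=> v r fv; case: (hf) => _ _ hf1 _; case: (hg) => _ _ hg1 _.
    rewrite hf1 // hg1 // (mod_actDl HM) //; exact: linR_el.
  + move=> v nv; case: (hf) => _ _ _ hf1; case: (hg) => _ _ _ hg1.
    by rewrite hf1 // hg1 // (add00 HM).
- move=> f hf; split.
  + move=> v _; apply: (mod_elN HM); exact: linR_el.
  + move=> v w fv fw; case: (hf) => _ hf1 _ _.
    rewrite hf1 // (oppDM HM) //; exact: linR_el.
  + move=> v r fv; case: (hf) => _ _ hf1 _.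
    rewrite hf1 // (oppactM HM) //; exact: linR_el.
  + move=> v nv; case: (hf) => _ _ _ hf1; by rewrite hf1 // (oppmz HM).
- move=> f X hf [rX cX]; split.
  + move=> v fv; rewrite ifs_fs //; exact: linR_el.
  + move=> v w fv fw; rewrite !ifs_fs //; last exact: finsupp_vadd.
    case: (hf) => _ hf1 _ _; rewrite mv_add // hf1 //; exact: mv_finsupp.
  + move=> v r fv; rewrite !ifs_fs //; last exact: finsupp_vscale.
    case: (hf) => _ _ hf1 _; rewrite mv_scale // hf1 //; exact: mv_finsupp.
  + move=> v nv; by rewrite ifs_nfs.
- move=> f g h hf hg hh; apply: functional_extensionality => v.
  apply: (mod_addA HM); exact: linR_el.
- move=> f g hf hg; apply: functional_extensionality => v.
  apply: (mod_addC HM); exact: linR_el.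
- move=> f hf; apply: functional_extensionality => v.
  apply: (mod_add0 HM); exact: linR_el.
- move=> f hf; apply: functional_extensionality => v.
  apply: (mod_addN HM); exact: linR_el.
- move=> f X Y hf hX hY; apply: functional_extensionality => v.
  case: (classic (finsupp v)) => fv.
    rewrite !ifs_fs // mv_matadd; case: (hf) => _ hf1 _ _; rewrite hf1 //.
      exact: mv_finsupp (proj2 hX) fv.
    exact: mv_finsupp (proj2 hY) fv.
  by rewrite !ifs_nfs // (add00 HM).
- move=> f g X hf hg hX; apply: functional_extensionality => v.
  case: (classic (finsupp v)) => fv.
    by rewrite !ifs_fs.
  by rewrite !ifs_nfs // (add00 HM).
- move=> f X Y hf hX hY; apply: functional_extensionality => v.
  case: (classic (finsupp v)) => fv.
    rewrite !ifs_fs // ?mv_matmul //; exact: mv_finsupp (proj2 hY) fv.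
  by rewrite !ifs_nfs.
- move=> f hf; apply: functional_extensionality => v.
  case: (classic (finsupp v)) => fv.
    by rewrite ifs_fs // mv_one.
  rewrite ifs_nfs //; case: (hf) => _ _ _ hf1; by rewrite hf1.
Qed.

End IObj.

Definition fx (R : pzRingType) (M : modl R) (x : car M) : vec R -> car M :=
  fun v => if excluded_middle_informative (finsupp v) then mact M x (v 0%N) else mz M.

Section Fx.
Variable R : pzRingType.
Variable M : modl R.
Hypothesis HM : RMod M.

Lemma fx_fs x v : finsupp v -> fx x v = mact M x (v 0%N).
Proof. rewrite /fx; by case: excluded_middle_informative. Qed.
Lemma fx_nfs x v : ~ finsupp v -> fx x v = mz M.
Proof. rewrite /fx; by case: excluded_middle_informative. Qed.

Lemma linR_fx x : el M x -> linR (fx x).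
Proof.
move=> hx; split.
- move=> v fv; rewrite fx_fs //; exact: (mod_elA HM).
- move=> v w fv fw; rewrite !fx_fs //; last exact: finsupp_vadd.
  by rewrite /vadd (mod_actDr HM).
- move=> v r fv; rewrite !fx_fs //; last exact: finsupp_vscale.
  by rewrite /vscale (mod_actM HM).
- move=> v nv; by rewrite fx_nfs.
Qed.

Lemma fx_add x y : el M x -> el M y -> fx (madd M x y) = madd (iobj M) (fx x) (fx y).
Proof.
move=> hx hy; apply: functional_extensionality => v /=.
case: (classic (finsupp v)) => fv.
  by rewrite !fx_fs // (mod_actDl HM).
by rewrite !fx_nfs // (add00 HM).
Qed.

Lemma fx_act x s : el M x -> fx (mact M x s) = mact (iobj M) (fx x) (scal00 s).
Proof.
move=> hx; apply: functional_extensionality => w.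
case: (classic (finsupp w)) => fw.
  rewrite iact_fs // fx_fs // mv_scal00 // fx_fs; last first.
    apply: finsupp_vscale; exact: finsupp_e0.
  by rewrite /vscale e0_0 mul1r (mod_actM HM).
by rewrite iact_nfs // fx_nfs.
Qed.

Lemma fx_mz : fx (mz M) = mz (iobj M).
Proof.
apply: functional_extensionality => w /=.
case: (classic (finsupp w)) => fw.
  by rewrite fx_fs // (mzact HM).
by rewrite fx_nfs.
Qed.

Lemma fx_lin (f : vec R -> car M) v : linR f -> finsupp v -> fx (f v) = mact (iobj M) f (V v).
Proof.
move=> hf fv; apply: functional_extensionality => w.
case: (classic (finsupp w)) => fw.
  rewrite iact_fs // fx_fs // mv_V //; case: hf => _ _ h _; by rewrite h.
by rewrite iact_nfs // fx_nfs.
Qed.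

Lemma fx_e0 x : el M x -> fx x e0 = x.
Proof. move=> hx; rewrite fx_fs ?e0_0 ?(mod_act1 HM) //; exact: finsupp_e0. Qed.

Lemma iact_scal00_e0 (f : vec R -> car M) r : linR f ->
  mact (iobj M) f (scal00 r) e0 = mact M (f e0) r.
Proof.
move=> hf; have fe := @finsupp_e0 R.
rewrite iact_fs // mv_scal00 // e0_0 mulr1; case: hf => _ _ h _; by rewrite h.
Qed.

End Fx.

Lemma homR_mz (R : pzRingType) (M N : modl R) (h : car M -> car N) :
  RMod M -> RMod N -> homR h -> h (mz M) = mz N.
Proof. move=> HM HN Hh; exact: (hom_mz HM HN Hh). Qed.

Lemma homL_mz (R : pzRingType) (M N : modl (mat R)) (h : car M -> car N) :
  LMod M -> LMod N -> homL h -> h (mz M) = mz N.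
Proof. move=> HM HN Hh; exact: (hom_mz HM HN Hh). Qed.

Lemma i_functor_ok (R : pzRingType) : i_functor R.
Proof.
split.
- move=> M HM; exact: LMod_iobj.
- move=> M N h HM HN Hh; split.
  + move=> f hf; split.
    * move=> v fv; apply: (hom_el Hh); exact: (linR_el HM).
    * move=> v w fv fw; rewrite /ihom; case: (hf) => _ h1 _ _.
      rewrite h1 // (hom_add Hh) //; exact: (linR_el HM).
    * move=> v r fv; rewrite /ihom; case: (hf) => _ _ h1 _.
      rewrite h1 // (hom_act Hh) //; exact: (linR_el HM).
    * move=> v nv; rewrite /ihom; case: (hf) => _ _ _ h1.
      rewrite h1 //; exact: (homR_mz HM HN Hh).
  + move=> f g hf hg; apply: functional_extensionality => v /=.
    rewrite /ihom (hom_add Hh) //; exact: (linR_el HM).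
  + move=> f X hf hX; apply: functional_extensionality => v /=.
    rewrite /ihom; case: (classic (finsupp v)) => fv.
      by rewrite !ifs_fs.
    rewrite !ifs_nfs //; exact: (homR_mz HM HN Hh).
- by move=> M HM f hf.
- by move=> M N P h g _ _ _ _ _ f hf.
Qed.

Lemma i_faithful_ok (R : pzRingType) : i_faithful R.
Proof.
move=> M N h h' HM HN Hh Hh' E x hx.
have := E _ (linR_fx HM hx); rewrite /ihom => /(congr1 (fun F => F e0)).
by rewrite fx_e0.
Qed.

Lemma i_full_ok (R : pzRingType) : i_full R.
Proof.
move=> M N g HM HN Hg.
have LM := LMod_iobj HM; have LN := LMod_iobj HN.
have fe := @finsupp_e0 R.
exists (fun x => g (fx x) e0); split.
- split.
  + move=> x hx; apply: (linR_el HN); apply: (hom_el Hg); exact: linR_fx.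
  + move=> x y hx hy; rewrite fx_add // (hom_add Hg) //; exact: linR_fx.
  + move=> x s hx _; rewrite fx_act // (hom_act Hg) //; last exact: rcf_scal00.
      rewrite iact_scal00_e0 //; apply: (hom_el Hg); exact: linR_fx.
    exact: linR_fx.
- move=> f hf; apply: functional_extensionality => v; rewrite /ihom.
  case: (classic (finsupp v)) => fv.
    rewrite fx_lin // (hom_act Hg) //; last exact: rcf_V.
    by rewrite iact_fs // V_e0_mv.
  have hgf : linR (g f) by exact: (hom_el Hg).
  have e1 : f v = mz M by case: (hf) => _ _ _ ->.
  have e2 : g f v = mz N by case: (hgf) => _ _ _ ->.
  by rewrite e1 e2 fx_mz // (homL_mz LM LN Hg).
Qed.

Definition trunc (R : pzRingType) (n : nat) (v : vec R) : vec R :=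
  fun i => if (i < n)%N then v i else 0.

Section Exact.
Variable R : pzRingType.
Variable M : modl R.
Hypothesis HM : RMod M.

Lemma msum_act n F r : (forall j, el M (F j)) ->
  mact M (@msum _ M n F) r = @msum _ M n (fun j => mact M (F j) r).
Proof.
move=> hF; elim: n => [|n IH] /=; first exact: (mzact HM).
by rewrite (mod_actDl HM (el_msum HM n hF) (hF n) I) IH.
Qed.

Lemma lin_zero (f : vec R -> car M) : linR f -> f (fun _ => 0) = mz M.
Proof.
move=> hf; have -> : (fun _ : nat => 0 : R) = vscale e0 0.
  apply: functional_extensionality => i; by rewrite /vscale mulr0.
case: (hf) => _ _ h _; rewrite h; last exact: finsupp_e0.
apply: (act0 HM); exact: (linR_el HM).
Qed.

Lemma trunc_S n (v : vec R) : trunc n.+1 v = vadd (trunc n v) (vscale (ej R n) (v n)).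
Proof.
apply: functional_extensionality => i; rewrite /trunc /vadd /vscale /ej.
case: (ltngtP i n) => h; rewrite ?mul0r ?mul1r ?addr0 ?add0r.
- by rewrite ltnS ltnW.
- by rewrite ltnS leqNgt h.
- by rewrite h ltnSn.
Qed.

Lemma trunc_full (v : vec R) : finsupp v -> trunc (zbound v) v = v.
Proof.
move=> fv; apply: functional_extensionality => i; rewrite /trunc.
case: ltnP => // h; by rewrite (zbP fv).
Qed.

Lemma finsupp_trunc n (v : vec R) : finsupp (trunc n v).
Proof. exists n => j hj; by rewrite /trunc ltnNge hj. Qed.

Lemma lin_decomp (f : vec R -> car M) v : linR f -> finsupp v ->
  f v = @msum _ M (zbound v) (fun j => mact M (f (ej R j)) (v j)).
Proof.
move=> hf fv; rewrite -{1}(trunc_full fv).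
elim: (zbound v) => [|n IH] /=.
  have -> : trunc 0 v = (fun _ => 0) by apply: functional_extensionality.
  exact: lin_zero.
case: (hf) => _ ha hs _.
rewrite trunc_S ha; first last.
- apply: finsupp_vscale; exact: finsupp_ej.
- exact: finsupp_trunc.
by rewrite hs ?IH //; exact: finsupp_ej.
Qed.

Lemma msum_vanish (xs : nat -> car M) (u : vec R) n : (forall j, el M (xs j)) ->
  finsupp u -> vanish_from u n ->
  @msum _ M (zbound u) (fun j => mact M (xs j) (u j)) = @msum _ M n (fun j => mact M (xs j) (u j)).
Proof.
move=> hx fu hn; have hel : forall j, el M (mact M (xs j) (u j)) by move=> j; exact: (mod_elA HM).
case: (leqP (zbound u) n) => h.
  symmetry; apply: (msum_trunc HM hel) => // j hj; rewrite (zbP fu) //; exact: (act0 HM).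
apply: (msum_trunc HM hel) => // [j hj|]; last exact: ltnW.
rewrite hn //; exact: (act0 HM).
Qed.

End Exact.

Lemma i_exact_ok (R : pzRingType) : i_exact R.
Proof.
move=> M1 M2 M3 f g H1 H2 H3 Hf Hg Ex phi hphi.
split.
- move=> [psi [hpsi e]]; apply: functional_extensionality => v.
  rewrite /ihom -e; apply/(Ex _ (hom_el Hf (linR_el H1 v hpsi))); exists (psi v); split => //.
  exact: (linR_el H1).
- move=> e.
  have hjx : forall j, exists x, el M1 x /\ f x = phi (ej R j).
    move=> j; apply/(Ex _ (linR_el H2 _ hphi)).
    exact: (congr1 (fun F => F (ej R j)) e).
  pose xs j := epsilon (inhabits (mz M1)) (fun x => el M1 x /\ f x = phi (ej R j)).
  have hxs : forall j, el M1 (xs j) /\ f (xs j) = phi (ej R j).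
    move=> j; exact: (epsilon_spec _ _ (hjx j)).
  have hxel : forall j, el M1 (xs j) by move=> j; case: (hxs j).
  pose psi (v : vec R) := if excluded_middle_informative (finsupp v)
    then @msum _ M1 (zbound v) (fun j => mact M1 (xs j) (v j)) else mz M1.
  have hel : forall (u : vec R) j, el M1 (mact M1 (xs j) (u j)).
    move=> u j; exact: (mod_elA H1).
  exists psi; split.
  + split.
    * move=> v fv; rewrite /psi ifs_fs //; exact: (el_msum H1).
    * move=> v w fv fw; rewrite /psi !ifs_fs //; last exact: finsupp_vadd.
      set K := maxn (zbound v) (zbound w).
      have hv : vanish_from v K by apply: (vanish_mono (zbP fv)); exact: leq_maxl.
      have hw : vanish_from w K by apply: (vanish_mono (zbP fw)); exact: leq_maxr.
      have hvw : vanish_from (vadd v w) K by move=> j hj; rewrite /vadd hv ?hw ?addr0.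
      rewrite (msum_vanish H1 hxel (finsupp_vadd fv fw) hvw) (msum_vanish H1 hxel fv hv).
      rewrite (msum_vanish H1 hxel fw hw) -(msum_add H1) //.
      have -> // : (fun j => mact M1 (xs j) (vadd v w j)) =
        (fun j => madd M1 (mact M1 (xs j) (v j)) (mact M1 (xs j) (w j))).
      apply: functional_extensionality => j; by rewrite /vadd (mod_actDr H1).
    * move=> v r fv; rewrite /psi !ifs_fs //; last exact: finsupp_vscale.
      have hvr : vanish_from (vscale v r) (zbound v).
        move=> j hj; by rewrite /vscale (zbP fv) // mul0r.
      rewrite (msum_vanish H1 hxel (finsupp_vscale r fv) hvr) msum_act //.
      have -> // : (fun j => mact M1 (xs j) (vscale v r j)) =
        (fun j => mact M1 (mact M1 (xs j) (v j)) r).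
      apply: functional_extensionality => j; by rewrite /vscale (mod_actM H1).
    * move=> v nv; by rewrite /psi ifs_nfs.
  + apply: functional_extensionality => v; rewrite /ihom /psi.
    case: (classic (finsupp v)) => fv.
      rewrite ifs_fs // (hom_msum _ H1 H2 Hf) // (lin_decomp H2 hphi fv).
      have -> // : (fun j => f (mact M1 (xs j) (v j))) = (fun j => mact M2 (phi (ej R j)) (v j)).
      apply: functional_extensionality => j; rewrite (hom_act Hf) //; by case: (hxs j) => _ ->.
    rewrite ifs_nfs // (homR_mz H1 H2 Hf); by case: hphi => _ _ _ ->.
Qed.

Section RObj.
Variable R : pzRingType.
Variable N : modl (mat R).
Hypothesis HN : LMod N.

Lemma rcf_e00 : rcf (e00 R).
Proof. exact: rcf_scal00. Qed.

Lemma e00_idem y : el N y -> mact N (mact N y (e00 R)) (e00 R) = mact N y (e00 R).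
Proof. move=> hy; by rewrite -(mod_actM HN hy rcf_e00 rcf_e00) /e00 matmul_scal00_e00. Qed.

Lemma robj_fix x : el (robj N) x -> mact N x (e00 R) = x.
Proof. case=> hx [y [hy ->]]; exact: e00_idem. Qed.

Lemma robj_mk y : el N y -> el (robj N) (mact N y (e00 R)).
Proof. move=> hy; split; [exact: (mod_elA HN hy rcf_e00) | by exists y]. Qed.

Lemma robj_elN x : el (robj N) x -> el N x.
Proof. by case. Qed.

Lemma robj_in x : el N x -> mact N x (e00 R) = x -> el (robj N) x.
Proof. move=> hx e; split => //; by exists x. Qed.

Lemma RMod_robj : RMod (robj N).
Proof.
have e0 := mod_el0 HN.
constructor => /=.
- apply: robj_in => //; exact: (mzact HN rcf_e00).
- move=> x y hx hy; have hxN := robj_elN hx; have hyN := robj_elN hy.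
  apply: robj_in; first exact: (mod_elD HN).
  rewrite (mod_actDl HN hxN hyN rcf_e00) (robj_fix hx) (robj_fix hy) //.
- move=> x hx; have hxN := robj_elN hx.
  apply: robj_in; first exact: (mod_elN HN).
  by rewrite (oppactM HN) ?robj_fix //; exact: rcf_e00.
- move=> x s hx _; have hxN := robj_elN hx.
  apply: robj_in; first exact: (mod_elA HN hxN (rcf_scal00 s)).
  by rewrite -(mod_actM HN hxN (rcf_scal00 s) rcf_e00) matmul_scal00_e00.
- move=> x y z hx hy hz; apply: (mod_addA HN); exact: robj_elN.
- move=> x y hx hy; apply: (mod_addC HN); exact: robj_elN.
- move=> x hx; apply: (mod_add0 HN); exact: robj_elN.
- move=> x hx; apply: (mod_addN HN); exact: robj_elN.
- move=> x s t hx _ _; rewrite -matadd_scal00 (mod_actDr HN) //;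
    [exact: robj_elN | exact: rcf_scal00 | exact: rcf_scal00].
- move=> x y s hx hy _; apply: (mod_actDl HN); try exact: robj_elN; exact: rcf_scal00.
- move=> x s t hx _ _; rewrite -matmul_scal00 (mod_actM HN) //;
    [exact: robj_elN | exact: rcf_scal00 | exact: rcf_scal00].
- move=> x hx; exact: robj_fix.
Qed.

End RObj.

Lemma r_functor_ok (R : pzRingType) : r_functor R.
Proof.
split.
- move=> N HN; exact: RMod_robj.
- move=> N N' g HN HN' Hg; split.
  + move=> x hx; rewrite /rhom; have hxN := robj_elN hx.
    have hg : el N' (g x) by exact: (hom_el Hg hxN).
    split => //; exists (g x); split => //.
    by rewrite -(hom_act Hg hxN (rcf_e00 R)) robj_fix.
  + move=> x y hx hy; rewrite /rhom /= (hom_add Hg) //; exact: robj_elN.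
  + move=> x s hx _; rewrite /rhom /= (hom_act Hg) //; [exact: robj_elN | exact: rcf_scal00].
- by [].
- by [].
Qed.

Lemma r_exact_ok (R : pzRingType) : r_exact R.
Proof.
move=> N1 N2 N3 f g H1 H2 H3 Hf Hg Ex y hy; rewrite /rhom.
have hyN := robj_elN hy.
split.
- move=> [x [hx e]]; apply/(Ex _ hyN); exists x; split => //; exact: robj_elN.
- move=> e; have [x [hx ex]] := (proj2 (Ex _ hyN)) e.
  exists (mact N1 x (e00 R)); split; first exact: robj_mk.
  by rewrite (hom_act Hf hx (rcf_e00 R)) ex robj_fix.
Qed.

Lemma matmul_V_e00 (R : pzRingType) (v : vec R) : matmul (V v) (e00 R) = V v.
Proof. by rewrite e00_V matmul_VV ?e0_0 ?vscale1 //; exact: finsupp_e0. Qed.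

Definition phiA (R : pzRingType) (N : modl (mat R)) (M : modl R)
  (u : car (robj N) -> car M) : car N -> car (iobj M) :=
  fun n v => if excluded_middle_informative (finsupp v) then u (mact N n (V v)) else mz M.

Definition psiA (R : pzRingType) (N : modl (mat R)) (M : modl R)
  (w : car N -> car (iobj M)) : car (robj N) -> car M := fun n => w n e0.

Section Adj.
Variable R : pzRingType.
Variables (N : modl (mat R)) (M : modl R).
Hypotheses (HN : LMod N) (HM : RMod M).

Lemma nV_robj n v : el N n -> finsupp v -> el (robj N) (mact N n (V v)).
Proof.
move=> hn fv; apply: robj_in; first exact: (mod_elA HN hn (rcf_V fv)).
by rewrite -(mod_actM HN hn (rcf_V fv) (rcf_e00 R)) matmul_V_e00.
Qed.

Lemma phiA_fs (u : car (robj N) -> car M) n v : finsupp v -> phiA u n v = u (mact N n (V v)).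
Proof. rewrite /phiA; by case: excluded_middle_informative. Qed.
Lemma phiA_nfs (u : car (robj N) -> car M) n v : ~ finsupp v -> phiA u n v = mz M.
Proof. rewrite /phiA; by case: excluded_middle_informative. Qed.

Lemma phiA_lin (u : car (robj N) -> car M) n : homR u -> el N n -> linR (phiA u n).
Proof.
move=> Hu hn; split.
- move=> v fv; rewrite phiA_fs //; apply: (hom_el Hu); exact: nV_robj.
- move=> v w fv fw; rewrite !phiA_fs //; last exact: finsupp_vadd.
  rewrite V_vadd (mod_actDr HN hn (rcf_V fv) (rcf_V fw)).
  by rewrite (hom_add Hu (nV_robj hn fv) (nV_robj hn fw)).
- move=> v r fv; rewrite !phiA_fs //; last exact: finsupp_vscale.
  rewrite -matmul_V_scal00 // (mod_actM HN hn (rcf_V fv) (rcf_scal00 r)).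
  by rewrite -(hom_act Hu (nV_robj hn fv) I).
- move=> v nv; by rewrite phiA_nfs.
Qed.

Lemma phiA_hom (u : car (robj N) -> car M) : homR u -> homL (phiA u).
Proof.
have RN := RMod_robj HN.
move=> Hu; split.
- move=> n hn; exact: phiA_lin.
- move=> n m hn hm; apply: functional_extensionality => v /=.
  case: (classic (finsupp v)) => fv.
    rewrite !phiA_fs // (mod_actDl HN hn hm (rcf_V fv)).
    by rewrite (hom_add Hu (nV_robj hn fv) (nV_robj hm fv)).
  by rewrite !phiA_nfs // (add00 HM).
- move=> n X hn hX; apply: functional_extensionality => v.
  case: (classic (finsupp v)) => fv.
    rewrite iact_fs // !phiA_fs //; last exact: mv_finsupp (proj2 hX) fv.
    by rewrite -(mod_actM HN hn hX (rcf_V fv)) matmul_V //; case: hX.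
  by rewrite iact_nfs // phiA_nfs.
Qed.

Lemma psiA_hom (w : car N -> car (iobj M)) : homL w -> homR (psiA w).
Proof.
have fe := @finsupp_e0 R.
move=> Hw; split.
- move=> n hn; rewrite /psiA; apply: (linR_el HM); apply: (hom_el Hw); exact: robj_elN.
- move=> n m hn hm; rewrite /psiA /= (hom_add Hw) //; exact: robj_elN.
- move=> n r hn _; rewrite /psiA /= (hom_act Hw) //; last exact: rcf_scal00.
    rewrite iact_scal00_e0 //; apply: (hom_el Hw); exact: robj_elN.
  exact: robj_elN.
Qed.

End Adj.

Lemma r_left_adjoint_ok (R : pzRingType) : r_left_adjoint_i R.
Proof.
exists (@phiA R), (@psiA R); split; [|split].
- move=> N M HN HM; split; [|split; [|split; [|split; [|split]]]].
  + move=> u Hu; exact: phiA_hom.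
  + move=> w Hw; exact: psiA_hom.
  + move=> u u' Hu Hu' E n hn; apply: functional_extensionality => v.
    case: (classic (finsupp v)) => fv.
      rewrite !phiA_fs //; apply: E; exact: nV_robj.
    by rewrite !phiA_nfs.
  + move=> w w' Hw Hw' E n hn; rewrite /psiA E //; exact: robj_elN.
  + move=> u Hu n hn; rewrite /psiA phiA_fs; last exact: finsupp_e0.
    by rewrite -e00_V robj_fix.
  + move=> w Hw n hn; apply: functional_extensionality => v.
    have hw : linR (w n) by exact: (hom_el Hw).
    case: (classic (finsupp v)) => fv.
      rewrite phiA_fs // /psiA (hom_act Hw hn (rcf_V fv)) iact_fs ?V_e0_mv //.
      exact: finsupp_e0.
    rewrite phiA_nfs //; by case: hw => _ _ _ ->.
- move=> N M M' u h HN HM HM' Hu Hh n hn; apply: functional_extensionality => v.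
  rewrite /ihom /=; case: (classic (finsupp v)) => fv.
    by rewrite !phiA_fs.
  rewrite !phiA_nfs //; symmetry; exact: (homR_mz HM HM' Hh).
- move=> N' N M g u HN' HN HM Hg Hu n hn; apply: functional_extensionality => v.
  rewrite /rhom /=; case: (classic (finsupp v)) => fv.
    by rewrite !phiA_fs // /= (hom_act Hg hn (rcf_V fv)).
  by rewrite !phiA_nfs.
Qed.

Lemma ri_iso_ok (R : pzRingType) : ri_iso_id R.
Proof.
have fe := @finsupp_e0 R.
exists (fun M f => f e0), (fun M x => fx x); split.
- move=> M HM; have LM := LMod_iobj HM; split.
  + split.
    * move=> f hf; apply: (linR_el HM); exact: robj_elN hf.
    * by [].
    * move=> f r hf _; change (mact (iobj M) f (scal00 r) e0 = mact M (f e0) r).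
      rewrite iact_scal00_e0 //; exact: robj_elN hf.

  + split.
    * move=> x hx; apply: robj_in; first exact: linR_fx.
      by rewrite /e00 -fx_act // (mod_act1 HM).
    * move=> x y hx hy; exact: fx_add.
    * move=> x r hx _; exact: fx_act.
  + move=> f hf /=; have hfi := robj_elN hf.
    rewrite fx_lin // -e00_V; exact: (robj_fix LM hf).
  + move=> x hx /=; exact: fx_e0.
- by [].
Qed.

Theorem proposition4p1 (R : pzRingType) :
  i_functor R /\ i_faithful R /\ i_full R /\ i_exact R /\
  r_functor R /\ r_exact R /\ r_left_adjoint_i R /\ ri_iso_id R.
Proof.
split; first exact: i_functor_ok.
split; first exact: i_faithful_ok.
split; first exact: i_full_ok.
split; first exact: i_exact_ok.
split; first exact: r_functor_ok.
split; first exact: r_exact_ok.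
split; first exact: r_left_adjoint_ok.
exact: ri_iso_ok.
Qed.
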